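(* For every $t\in\mathbb{R}$, the points $\mathbf R(t),\mathbf R(t+\tfrac13),\mathbf R(t+\tfrac23)$ are mutually orthogonal, and the closure of the open octant $$O(t):=\{\mathbf r\in S^2 : \mathbf r\cdot\mathbf R(t+s)>0 \text{ for all } s\in\{0,\tfrac13,\tfrac23\}\}$$ satisfies $\overline{O(t)}\subseteq A$.
   Context: For $t\in[-\tfrac12,0)$ define points of $S^2\subset\mathbb{R}^3$: $\mathbf r_1(t)=\big(\tfrac{1}{\sqrt2},\,t,\,\sqrt{\tfrac12-t^2}\big)$, $\mathbf r_2(t)=\Big(-\tfrac{\frac12+t}{1+t},\,\tfrac1{\sqrt2},\,\tfrac1{\sqrt2}\tfrac{\sqrt{\frac12-t^2}}{1+t}\Big)$, $\mathbf r_3(t)=\mathbf r_1(t)\times\mathbf r_2(t)=\Big(-\tfrac1{\sqrt2}\tfrac{\sqrt{\frac12-t^2}}{1+t},\,-\sqrt{\tfrac12-t^2},\,\tfrac{\frac12+t+t^2}{1+t}\Big)$. Let $R_{\pi/2}$ be the rotation $(x,y,z)\mapsto(-y,x,z)$ (by $\pi/2$ about the $z$-axis). Define $\mathbf r_0:[0,\tfrac14)\to S^2$ by $\mathbf r_0(t)=\mathbf r_1(6t-\tfrac12)$ for $t\in[0,\tfrac1{12})$, $\mathbf r_0(t)=R_{\pi/2}^3\mathbf r_2(6t-1)$ for $t\in[\tfrac1{12},\tfrac16)$, $\mathbf r_0(t)=R_{\pi/2}^2\mathbf r_3(6t-\tfrac32)$ for $t\in[\tfrac16,\tfrac14)$.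 Define $\mathbf R:[0,1)\to S^2$ by $\mathbf R(t)=R_{\pi/2}^k\,\mathbf r_0(t-\tfrac k4)$ for $t\in[\tfrac k4,\tfrac{k+1}4)$, $k=0,1,2,3$, and extend $\mathbf R$ to $\mathbb R$ periodically with period $1$: $\mathbf R(t):=\mathbf R(t-\lfloor t\rfloor)$. The image $\Gamma=\mathbf R(\mathbb R)$ is a closed curve on $S^2$; let $A\subseteq S^2$ be the closed region bounded by $\Gamma$ containing the north pole, i.e. $A=\Gamma\cup C$, where $C$ is the connected component of $S^2\setminus\Gamma$ containing $(0,0,1)$. *)

(* Defs.v *)
From HB Require Import structures.
From mathcomp Require Import all_boot all_order all_algebra.
From mathcomp Require Import all_classical all_reals all_analysis.
Set Implicit Arguments. Unset Strict Implicit. Unset Printing Implicit Defensive.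
Import Order.TTheory GRing.Theory Num.Theory.
Import numFieldNormedType.Exports.
Local Open Scope classical_set_scope.
Local Open Scope ring_scope.

Notation pt3 R := (R * R * R)%type.

Section Curve.
Variable R : realType.

Local Notation pt := (pt3 R).
Definition mkpt (x y z : R) : pt := (x, y, z).
Definition px (p : pt) := p.1.1.
Definition py (p : pt) := p.1.2.
Definition pz (p : pt) := p.2.

Definition dot (p q : pt) : R := px p * px q + py p * py q + pz p * pz q.
Definition cross (p q : pt) : pt :=
  mkpt (py p * pz q - pz p * py q)
       (pz p * px q - px p * pz q)
       (px p * py q - py p * px q).

Definition S2 : set pt := [set p | dot p p = 1].
Definition north_pole : pt := mkpt 0 0 1.

Definition rot (p : pt) : pt := mkpt (- py p) (px p) (pz p).

Definition s12 (t : R) : R := Num.sqrt (2^-1 - t ^+ 2).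
Definition isq2 : R := (Num.sqrt 2)^-1.

Definition r1 (t : R) : pt := mkpt isq2 t (s12 t).
Definition r2 (t : R) : pt :=
  mkpt (- ((2^-1 + t) / (1 + t))) isq2 (isq2 * (s12 t / (1 + t))).
Definition r3 (t : R) : pt := cross (r1 t) (r2 t).

(* r0 on [0, 1/4) *)
Definition r0 (t : R) : pt :=
  if t < 12^-1 then r1 (6 * t - 2^-1)
  else if t < 6^-1 then rot (rot (rot (r2 (6 * t - 1))))
  else rot (rot (r3 (6 * t - 3 / 2))).

Definition Rc0 (u : R) : pt :=
  if u < 4^-1 then r0 u
  else if u < 2^-1 then rot (r0 (u - 4^-1))
  else if u < 3 / 4 then rot (rot (r0 (u - 2^-1)))
  else rot (rot (rot (r0 (u - 3 / 4)))).

Definition Rcurve (t : R) : pt := Rc0 (t - (Num.floor t)%:~R).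

Definition Gamma : set pt := range Rcurve.

Definition regionA : set pt :=
  Gamma `|` connected_component (S2 `\` Gamma) north_pole.

Definition octant (t : R) : set pt :=
  [set r | S2 r /\ 0 < dot r (Rcurve t) /\ 0 < dot r (Rcurve (t + 3^-1))
                /\ 0 < dot r (Rcurve (t + 2 / 3))].

End Curve.

(* Main.v *)
Require Import Defs.
From HB Require Import structures.
From mathcomp Require Import all_boot all_order all_algebra.
From mathcomp Require Import all_classical all_reals all_analysis.
From mathcomp Require Import ring lra.
Import Order.TTheory GRing.Theory Num.Theory.
Import numFieldNormedType.Exports.
Local Open Scope classical_set_scope.
Local Open Scope ring_scope.

Section Vec.
Variable R : realType.
Local Notation pt := (pt3 R).
Definition V1 (h w S : R) : pt := mkpt h w S.
Definition V2 (h w S : R) : pt := mkpt (- ((2^-1 + w) / (1 + w))) h (h * (S / (1 + w))).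
Definition V3 (h w S : R) := cross (V1 h w S) (V2 h w S).

Lemma V3E (h w S : R) : h * h = 2^-1 -> 1 + w != 0 ->
  V3 h w S = mkpt (-(h*S/(1+w))) (-S) ((2^-1+w+w^+2)/(1+w)).
Proof.
move=> hh w1; rewrite /V3 /cross /V1 /V2 /mkpt /px /py /pz /=.
(congr (pair (pair _ _) _)); rewrite ?mulrA ?hh.
- field => //.
- field => //.
- field => //.
Qed.

Lemma sq_le (x y : R) : 0 <= y -> x^+2 <= y^+2 -> x <= y.
Proof. move=> y0 h; case: (lerP x y) => // yx; nra. Qed.

Lemma brF {s u : R} : -2^-1 <= s -> s <= 0 -> -2^-1 <= u -> u <= 0 -> u <= s ->
  (2^-1-s^+2)*(2^-1+u+u^+2)^+2 <= (2^-1-u^+2)*(2^-1+s+s*u)^+2.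
Proof.
move=> *.
have Q : 0 <= 2^-1 + 5/4*u + u^+2 + u^+3/2 + s*(3/4 + 2*u + 3/2*u^+2).
  have c : 0 < 3/4 + 2*u + 3/2*u^+2 by nra.
  have : 0 <= (1+2*u)*(1/8+u^+2/4) by nra.
  nra.
have E : (2^-1-u^+2)*(2^-1+s+s*u)^+2 - (2^-1-s^+2)*(2^-1+u+u^+2)^+2 =
  (s-u)*(2^-1 + 5/4*u + u^+2 + u^+3/2 + s*(3/4 + 2*u + 3/2*u^+2)) by field.
rewrite -subr_ge0 E; apply: mulr_ge0 => //; lra.
Qed.

Lemma brG {s u : R} : -2^-1 <= s -> s <= 0 -> -2^-1 <= u -> u <= 0 -> s <= u ->
  (2^-1-s^+2)*(2^-1+u+u^+2)^+2 <= (2^-1-u^+2)*(2^-1+u+s*u)^+2.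
Proof.
move=> *.
have Q : 3/4*u + 2*u^+2 + 3/2*u^+3 + s*(1/4 + u + 5/2*u^+2 + 2*u^+3) <= 0.
  have c : 0 < 1/4 + u + 5/2*u^+2 + 2*u^+3.
    have : 0 <= u^+2*(2*u+1) by nra.
    nra.
  have c2 : 0 < 3/4 + 2*u + 3/2*u^+2 by nra.
  nra.
have E : (2^-1-u^+2)*(2^-1+u+s*u)^+2 - (2^-1-s^+2)*(2^-1+u+u^+2)^+2 =
  (s-u)*(3/4*u + 2*u^+2 + 3/2*u^+3 + s*(1/4 + u + 5/2*u^+2 + 2*u^+3)) by field.
rewrite -subr_ge0 E; apply: mulr_le0 => //; lra.
Qed.

Lemma le0_eq (x y d : R) : 0 < d -> x * d = y -> y <= 0 -> x <= 0.
Proof. move=> d0 <- h; rewrite -(pmulr_rle0 _ d0) mulrC //. Qed.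

Variables (h s u sg ta : R).
Definition HY := [/\ h * h = 2^-1, 0 < h, -2^-1 <= s, s <= 0 &
  [/\ -2^-1 <= u, u <= 0, 0 <= sg, 0 <= ta &
  sg ^+ 2 = 2^-1 - s^+2 /\ ta ^+ 2 = 2^-1 - u^+2]].
Lemma HY_hh : HY -> h * h = 2^-1. Proof. by case. Qed.
Lemma HYa : HY -> 0 < 1 + s. Proof. case=> _ _ s1 _ _; lra. Qed.
Lemma HYb : HY -> 0 < 1 + u. Proof. case=> _ _ _ _ [u1 _ _ _ _]; lra. Qed.
Lemma HYan : HY -> 1 + s != 0. Proof. by move/HYa; rewrite lt0r => /andP[]. Qed.
Lemma HYbn : HY -> 1 + u != 0. Proof. by move/HYb; rewrite lt0r => /andP[]. Qed.
Ltac hy H := have a0 := HYa H; have b0 := HYb H; have an := HYan H; have bn := HYbn H;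
  case: H => hh h0 s1 s0 [u1 u0 sg0 ta0 [sgE taE]].

Ltac unf := rewrite /dot /Defs.rot /V1 /V2 /mkpt /px /py /pz /=.

Lemma d00a : HY -> s <= u -> dot (V1 h s sg) (V2 h u ta) <= 0.
Proof.
move=> H su; hy H; unf.
apply: (@le0_eq _ (h * (-(2^-1+u) + s*(1+u) + sg*ta)) (1+u) b0); first by field.
apply: mulr_ge0_le0; first lra.
have : 0 <= (sg - ta)^+2 by apply: sqr_ge0.
have : 0 <= (u - s) * (2 + u - s) by apply: mulr_ge0; lra.
nra.
Qed.

Lemma sg_le_h : HY -> sg <= h.
Proof. move=> H; hy H; apply: sq_le; [lra|]. rewrite sgE (expr2 h) hh. nra. Qed.
Lemma ta_le_h : HY -> ta <= h.
Proof. move=> H; hy H; apply: sq_le; [lra|]. rewrite taE (expr2 h) hh. nra. Qed.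
Lemma sg_le_a : HY -> sg <= 1 + s.
Proof. move=> H; hy H; apply: sq_le; [lra|]. rewrite sgE. nra. Qed.
Lemma ta_le_b : HY -> ta <= 1 + u.
Proof. move=> H; hy H; apply: sq_le; [lra|]. rewrite taE. nra. Qed.
Lemma sg_ge : HY -> 2^-1 <= sg.
Proof. move=> H; hy H. case: (lerP (2^-1) sg) => // lt. nra. Qed.
Lemma ta_ge : HY -> 2^-1 <= ta.
Proof. move=> H; hy H. case: (lerP (2^-1) ta) => // lt. nra. Qed.
Lemma ta_c3 : HY -> 2^-1 + u + u^+2 <= ta * (1 + u).
Proof.
move=> H; hy H; apply: sq_le; first by nra.
rewrite exprMn taE.
have : 0 <= (1+2*u)*(2^-1*2^-1 - u/2 - 3/2*u^+2 - u^+3).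
  apply: mulr_ge0; first lra.
  have : 0 <= u^+2 * (1+2*u) by nra.
  nra.
nra.
Qed.
Lemma sg_c3 : HY -> 2^-1 + s + s^+2 <= sg * (1 + s).
Proof.
move=> H; hy H; apply: sq_le; first by nra.
rewrite exprMn sgE.
have : 0 <= (1+2*s)*(2^-1*2^-1 - s/2 - 3/2*s^+2 - s^+3).
  apply: mulr_ge0; first lra.
  have : 0 <= s^+2 * (1+2*s) by nra.
  nra.
nra.
Qed.
Lemma c3h_s : HY -> 2 * h * (2^-1 + s + s^+2) <= sg.
Proof.
move=> H; hy H; apply: sq_le => //.
rewrite !exprMn sgE (expr2 h) hh.
have : 0 <= (-s) * (2 + 5*s + 4*s^+2 + 2*s^+3).
  apply: mulr_ge0; first lra.
  have : 0 <= s^+2 * (1+2*s) by nra.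
  nra.
nra.
Qed.
Lemma c3h_u : HY -> 2 * h * (2^-1 + u + u^+2) <= ta.
Proof.
move=> H; hy H; apply: sq_le => //.
rewrite !exprMn taE (expr2 h) hh.
have : 0 <= (-u) * (2 + 5*u + 4*u^+2 + 2*u^+3).
  apply: mulr_ge0; first lra.
  have : 0 <= u^+2 * (1+2*u) by nra.
  nra.
nra.
Qed.
Lemma hsgta : HY -> h * sg * ta <= 2^-1 * (1 + s + u + 2*s*u).
Proof.
move=> H; hy H; apply: sq_le.
  have : 0 <= (1+2*s)*(1+2*u) by apply: mulr_ge0; lra.
  nra.
rewrite !exprMn sgE taE (expr2 h) hh.
have : 0 <= (1 + 2*s + 2*u + 2*s*u)^+2 by apply: sqr_ge0.
nra.
Qed.

Definition c3 (w : R) := 2^-1 + w + w^+2.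

Ltac v3 H := rewrite ?(V3E _ _ _ (HY_hh H) (HYan H)) ?(V3E _ _ _ (HY_hh H) (HYbn H)).

Lemma d00b : HY -> u <= s -> dot (V1 h s sg) (V3 h u ta) <= 0.
Proof.
move=> H us; v3 H; hy H; unf.
apply: (@le0_eq _ (-(h*h)*ta - s*ta*(1+u) + sg*c3 u) (1+u) b0); first by rewrite /c3; field; rewrite ?an ?bn.
have := brF s1 s0 u1 u0 us; rewrite /c3 => F.
have : sg * (2^-1+u+u^+2) <= ta * (2^-1 + s + s*u).
  apply: sq_le; first by apply: mulr_ge0 => //; nra.
  rewrite !exprMn sgE taE. nra.
rewrite hh; nra.
Qed.

Lemma d01a : HY -> u <= s -> dot (V2 h s sg) (V1 h u ta) <= 0.
Proof.
move=> H us; hy H; unf.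
apply: (@le0_eq _ (h * (-(2^-1+s) + u*(1+s) + sg*ta)) (1+s) a0); first by field; rewrite ?an ?bn.
apply: mulr_ge0_le0; first lra.
have : 0 <= (sg - ta)^+2 by apply: sqr_ge0.
have : 0 <= (s - u) * (2 + s - u) by apply: mulr_ge0; lra.
nra.
Qed.

Lemma d01b : HY -> s <= u -> dot (V2 h s sg) (V3 h u ta) <= 0.
Proof.
move=> H su; v3 H; hy H; unf.
apply: (@le0_eq _ (h*((2^-1+s)*ta - ta*(1+s)*(1+u) + sg*c3 u)) ((1+s)*(1+u))); first by apply: mulr_gt0.
  by rewrite /c3; field; rewrite ?an ?bn.
apply: mulr_ge0_le0; first lra.
have := brG s1 s0 u1 u0 su; rewrite /c3 => F.
have : sg * (2^-1+u+u^+2) <= ta * (2^-1 + u + s*u).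
  apply: sq_le; first by apply: mulr_ge0 => //; nra.
  rewrite !exprMn sgE taE. nra.
nra.
Qed.

Lemma d02a : HY -> s <= u -> dot (V3 h s sg) (V1 h u ta) <= 0.
Proof.
move=> H su; v3 H; hy H; unf.
apply: (@le0_eq _ (-(h*h)*sg - sg*u*(1+s) + c3 s*ta) (1+s) a0); first by rewrite /c3; field; rewrite ?an ?bn.
have := brF u1 u0 s1 s0 su; rewrite /c3 => F.
have : ta * (2^-1+s+s^+2) <= sg * (2^-1 + u + u*s).
  apply: sq_le; first by apply: mulr_ge0 => //; nra.
  rewrite !exprMn sgE taE. nra.
rewrite hh; nra.
Qed.

Lemma d02b : HY -> u <= s -> dot (V3 h s sg) (V2 h u ta) <= 0.
Proof.
move=> H us; v3 H; hy H; unf.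
apply: (@le0_eq _ (h*(sg*(2^-1+u) - sg*(1+s)*(1+u) + c3 s*ta)) ((1+s)*(1+u))); first by apply: mulr_gt0.
  by rewrite /c3; field; rewrite ?an ?bn.
apply: mulr_ge0_le0; first lra.
have := brG u1 u0 s1 s0 us; rewrite /c3 => F.
have : ta * (2^-1+s+s^+2) <= sg * (2^-1 + s + u*s).
  apply: sq_le; first by apply: mulr_ge0 => //; nra.
  rewrite !exprMn sgE taE. nra.
nra.
Qed.

Lemma d10 : HY -> dot (Defs.rot (V1 h s sg)) (V3 h u ta) <= 0.
Proof.
move=> H; have := sg_le_h H; have := ta_c3 H; v3 H; hy H; unf => T S.
apply: (@le0_eq _ (s*h*ta - h*ta*(1+u) + sg*c3 u) (1+u) b0); first by rewrite /c3; field; rewrite ?an ?bn.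
rewrite /c3; have c0 : 0 <= 2^-1 + u + u^+2 by nra.
have e1 : sg * (2^-1 + u + u^+2) <= h * (2^-1 + u + u^+2) by apply: ler_wpM2r.
have e2 : h * (2^-1 + u + u^+2) <= h * (ta * (1+u)) by apply: ler_wpM2l => //; lra.
have e3 : s * h * ta <= 0 by apply: mulr_le0_ge0 => //; apply: mulr_le0_ge0 => //; lra.
nra.
Qed.

Lemma d11 : HY -> dot (Defs.rot (V2 h s sg)) (V1 h u ta) <= 0.
Proof.
move=> H; have := hsgta H; hy H; unf => T.
apply: (@le0_eq _ (-(h*h)*(1+s) - (2^-1+s)*u + h*sg*ta) (1+s) a0); first by field; rewrite ?an ?bn.
rewrite hh; nra.
Qed.

Lemma d12 : HY -> dot (Defs.rot (V3 h s sg)) (V2 h u ta) <= 0.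
Proof.
move=> H; have := c3h_s H; have tb := ta_le_b H.
v3 H; hy H; unf => T.
apply: (@le0_eq _ (-sg*(2^-1+u)*(1+s) - h*h*sg*(1+u) + c3 s*h*ta) ((1+s)*(1+u))); first by apply: mulr_gt0.
  by rewrite /c3; field; rewrite ?an ?bn.
rewrite hh /c3; have c0 : 0 <= 2^-1 + s + s^+2 by nra.
have : 0 <= sg * (1+s) * (2^-1+u) by apply: mulr_ge0; [apply: mulr_ge0|]; lra.
nra.
Qed.

Lemma d20 : HY -> dot (Defs.rot (Defs.rot (V1 h s sg))) (V1 h u ta) <= 0.
Proof.
move=> H; hy H; unf.
have : 0 <= (sg - ta)^+2 by apply: sqr_ge0.
nra.
Qed.

Lemma d21 : HY -> dot (Defs.rot (Defs.rot (V2 h s sg))) (V2 h u ta) <= 0.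
Proof.
move=> H; hy H; unf.
apply: (@le0_eq _ (-(2^-1+s)*(2^-1+u) - h*h*(1+s)*(1+u) + h*h*sg*ta) ((1+s)*(1+u))); first by apply: mulr_gt0.
  by field; rewrite ?an ?bn.
have : 0 <= (sg - ta)^+2 by apply: sqr_ge0.
have : 0 <= (s+2^-1) * (u+2^-1) by apply: mulr_ge0; lra.
rewrite hh; nra.
Qed.

Lemma d22 : HY -> dot (Defs.rot (Defs.rot (V3 h s sg))) (V3 h u ta) <= 0.
Proof.
move=> H; have := sg_ge H; have := ta_ge H; v3 H; hy H; unf => T S.
apply: (@le0_eq _ (-(h*h)*sg*ta - sg*ta*(1+s)*(1+u) + c3 s * c3 u) ((1+s)*(1+u))); first by apply: mulr_gt0.
  by rewrite /c3; field; rewrite ?an ?bn.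
rewrite /c3 hh.
have e1 : 0 <= 2^-1 + s + s^+2 <= (1+s)/2 by apply/andP; split; nra.
have e2 : 0 <= 2^-1 + u + u^+2 <= (1+u)/2 by apply/andP; split; nra.
case/andP: e1 => e1 e1'; case/andP: e2 => e2 e2'.
have : (2^-1 + s + s^+2) * (2^-1 + u + u^+2) <= (1+s)/2 * ((1+u)/2) by apply: ler_pM.
have : 2^-1 * 2^-1 <= sg * ta by apply: ler_pM; lra.
have : 0 <= (1+s)*(1+u) by apply: mulr_ge0; lra.
nra.
Qed.

Lemma d30 : HY -> dot (Defs.rot (Defs.rot (Defs.rot (V1 h s sg)))) (V2 h u ta) <= 0.
Proof.
move=> H; have := hsgta H; hy H; unf => T.
apply: (@le0_eq _ (-s*(2^-1+u) - h*h*(1+u) + sg*h*ta) (1+u) b0); first by field; rewrite ?an ?bn.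
rewrite hh; nra.
Qed.

Lemma d31 : HY -> dot (Defs.rot (Defs.rot (Defs.rot (V2 h s sg)))) (V3 h u ta) <= 0.
Proof.
move=> H; have := c3h_u H; have sb := sg_le_a H.
v3 H; hy H; unf => T.
apply: (@le0_eq _ (-(h*h)*ta*(1+s) - (2^-1+s)*ta*(1+u) + h*sg*c3 u) ((1+s)*(1+u))); first by apply: mulr_gt0.
  by rewrite /c3; field; rewrite ?an ?bn.
rewrite hh /c3; have c0 : 0 <= 2^-1 + u + u^+2 by nra.
have : 0 <= ta * (1+u) * (2^-1+s) by apply: mulr_ge0; [apply: mulr_ge0|]; lra.
nra.
Qed.

Lemma d32 : HY -> dot (Defs.rot (Defs.rot (Defs.rot (V3 h s sg)))) (V1 h u ta) <= 0.
Proof.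
move=> H; have := ta_le_h H; have := sg_c3 H; v3 H; hy H; unf => T S.
apply: (@le0_eq _ (-sg*h*(1+s) + h*sg*u + c3 s*ta) (1+s) a0); first by rewrite /c3; field; rewrite ?an ?bn.
rewrite /c3; have c0 : 0 <= 2^-1 + s + s^+2 by nra.
have e1 : (2^-1 + s + s^+2) * ta <= (2^-1 + s + s^+2) * h by apply: ler_wpM2l.
have e2 : h * (2^-1 + s + s^+2) <= h * (sg * (1+s)) by apply: ler_wpM2l => //; lra.
have e3 : h * sg * u <= 0 by apply: mulr_ge0_le0 => //; apply: mulr_ge0; lra.
nra.
Qed.
End Vec.

Section Top.
Variable R : realType.
Local Notation pt := (pt3 R).
Lemma conn_between (A B : set pt) : connected A -> A `<=` B -> B `<=` closure A ->
  connected B.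
Proof.
move=> cA AB Bcl D [x Dx] [C oC DBC] [K cK DBK].
have AC : A `&` C = A `&` K.
  apply/seteqP; split => y [Ay Hy]; split => //.
  - have : D y by rewrite DBC; split => //; apply: AB.
    by rewrite DBK => -[].
  - have : D y by rewrite DBK; split => //; apply: AB.
    by rewrite DBC => -[].
have Bx : (B `&` C) x by rewrite -DBC.
have ne : A `&` C !=set0.
  case: Bx => Bx Cx; have := Bcl x Bx C.
  by apply; apply: open_nbhs_nbhs; split.
have := cA _ ne (ex_intro2 _ _ C oC erefl) (ex_intro2 _ _ K cK AC) => AE.
have AK : A `<=` K.
  move=> y Ay; have : (A `&` C) y by rewrite AE.
  by rewrite AC => -[].
have BK : B `<=` K.
  move=> y By; have := Bcl y By; rewrite -/(closure A) => cy.
  by apply: cK; apply: (closureS AK).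
rewrite DBK; apply/seteqP; split => y; first by case.
by move=> By; split => //; apply: BK.
Qed.

Definition lin (a b x : R) := (1 - x) * a + x * b.
Definition Qg (p : pt) (x : R) := lin (px p) 0 x ^+ 2 + lin (py p) 0 x ^+ 2 + lin (pz p) 1 x ^+ 2.
Definition gam (p : pt) (l : R) : pt :=
  mkpt (lin (px p) 0 l / Num.sqrt (Qg p l)) (lin (py p) 0 l / Num.sqrt (Qg p l))
       (lin (pz p) 1 l / Num.sqrt (Qg p l)).

Lemma lin_cont (a b : R) (l : R) : {for l, continuous (lin a b)}.
Proof.
apply: continuousD; apply: continuousM.
- apply: continuousB; [exact: cst_continuous | exact: id].
- exact: cst_continuous.
- exact: id.
- exact: cst_continuous.
Qed.

Lemma cont_sq (f : R -> R) l : {for l, continuous f} -> {for l, continuous (fun x => f x ^+ 2)}.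
Proof.
move=> cf; have -> : (fun x => f x ^+ 2) = f \* f by apply/funext => x; rewrite expr2.
exact: continuousM.
Qed.

Lemma Qg_cont p l : {for l, continuous (Qg p)}.
Proof.
have -> : Qg p = (fun x => lin (px p) 0 x ^+ 2) + (fun x => lin (py p) 0 x ^+ 2) +
   (fun x => lin (pz p) 1 x ^+ 2) by apply/funext.
by apply: continuousD; [apply: continuousD|]; apply: cont_sq; apply: lin_cont.
Qed.

Lemma coord_cont (f : R -> R) p l : 0 < Qg p l -> {for l, continuous f} ->
  {for l, continuous (fun x => f x / Num.sqrt (Qg p x))}.
Proof.
move=> Q0 cf; apply: continuousM => //.
apply: continuousV; first by rewrite sqrtr_eq0 -ltNge.
apply: continuous_comp; first exact: Qg_cont.
exact: sqrt_continuous.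
Qed.

Lemma gam_cont (p : pt) (l : R) : 0 < Qg p l -> {for l, continuous (gam p)}.
Proof.
move=> Q0; rewrite /gam /mkpt /prop_for /continuous_at.
set X := fun x => lin (px p) 0 x / Num.sqrt (Qg p x).
set Y := fun x => lin (py p) 0 x / Num.sqrt (Qg p x).
set Z := fun x => lin (pz p) 1 x / Num.sqrt (Qg p x).
have cX : {for l, continuous X} by apply: coord_cont => //; apply: lin_cont.
have cY : {for l, continuous Y} by apply: coord_cont => //; apply: lin_cont.
have cZ : {for l, continuous Z} by apply: coord_cont => //; apply: lin_cont.
have cXY : (fun x => (X x, Y x)) @ l --> (X l, Y l).
  exact: (@cvg_pair _ _ _ _ (nbhs (X l)) (nbhs (Y l))).
exact: (@cvg_pair _ _ _ _ (nbhs (X l, Y l)) (nbhs (Z l))).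
Qed.

Lemma dot_gam p l e : dot (gam p l) e = ((1 - l) * dot p e + l * pz e) / Num.sqrt (Qg p l).
Proof. rewrite /gam /dot /lin /mkpt /px /py /pz /=; ring. Qed.

Lemma Qg_pos p l e : 0 < (1 - l) * dot p e + l * pz e -> 0 < Qg p l.
Proof.
move=> H; rewrite lt_neqAle; apply/andP; split; last first.
  by rewrite /Qg; apply: addr_ge0; [apply: addr_ge0|]; apply: sqr_ge0.
apply/eqP => Q0; move: H.
have e1 : lin (px p) 0 l = 0.
  apply/eqP; rewrite -sqrf_eq0 eq_le sqr_ge0 andbT.
  have := sqr_ge0 (lin (py p) 0 l); have := sqr_ge0 (lin (pz p) 1 l).
  move: Q0; rewrite /Qg; lra.
have e2 : lin (py p) 0 l = 0.
  apply/eqP; rewrite -sqrf_eq0 eq_le sqr_ge0 andbT.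
  have := sqr_ge0 (lin (px p) 0 l); have := sqr_ge0 (lin (pz p) 1 l).
  move: Q0; rewrite /Qg; lra.
have e3 : lin (pz p) 1 l = 0.
  apply/eqP; rewrite -sqrf_eq0 eq_le sqr_ge0 andbT.
  have := sqr_ge0 (lin (py p) 0 l); have := sqr_ge0 (lin (px p) 0 l).
  move: Q0; rewrite /Qg; lra.
have -> : (1 - l) * dot p e + l * pz e =
  lin (px p) 0 l * px e + lin (py p) 0 l * py e + lin (pz p) 1 l * pz e.
  by rewrite /lin /dot; ring.
by rewrite e1 e2 e3 !mul0r !addr0 ltxx.
Qed.

Lemma S2_gam p l : 0 < Qg p l -> S2 (gam p l).
Proof.
move=> Q0; rewrite /S2 /= /dot /gam /mkpt /px /py /pz /=.
have N0 : Num.sqrt (Qg p l) != 0 by rewrite sqrtr_eq0 -ltNge.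
have NE : Num.sqrt (Qg p l) ^+ 2 = Qg p l by rewrite sqr_sqrtr // ltW.
transitivity (Qg p l / Num.sqrt (Qg p l) ^+ 2); first by rewrite /Qg; field.
by rewrite NE divff // gt_eqF.
Qed.

Lemma lin_pos (l d z : R) : 0 <= l <= 1 -> 0 < d -> 0 < z -> 0 < (1 - l) * d + l * z.
Proof.
move=> /andP[l0 l1] d0 z0; case: (lerP l (2^-1)) => hl.
- have : 0 <= l * z by apply: mulr_ge0 => //; lra.
  have : 2^-1 * d <= (1 - l) * d by apply: ler_wpM2r; lra.
  lra.
- have : 0 <= (1 - l) * d by apply: mulr_ge0 => //; lra.
  have : 2^-1 * z <= l * z by apply: ler_wpM2r; lra.
  lra.
Qed.

Lemma gam0 p : S2 p -> gam p 0 = p.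
Proof.
case: p => [[x y] z]; rewrite /S2 /= /dot /= => H.
have Q : Qg (x, y, z) 0 = 1.
  by rewrite -H /Qg /lin /=; ring.
by rewrite /gam Q sqrtr1 !divr1 /lin /mkpt /px /py /pz /=; congr (pair (pair _ _) _); ring.
Qed.

Lemma gam1 p : gam p 1 = north_pole R.
Proof.
have Q : Qg p 1 = 1 by rewrite /Qg /lin; ring.
by rewrite /gam Q sqrtr1 !divr1 /lin /north_pole /mkpt /=; congr (pair (pair _ _) _); ring.
Qed.

Lemma oct_conn (e1 e2 e3 : pt) : 0 < pz e1 -> 0 < pz e2 -> 0 < pz e3 ->
  connected [set r | S2 r /\ 0 < dot r e1 /\ 0 < dot r e2 /\ 0 < dot r e3].
Proof.
move=> z1 z2 z3; set O := [set r | _].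
have sub : forall p, O p -> gam p @` `[0, 1] `<=` O.
  move=> p [Sp [d1 [d2 d3]]] _ [l /= l01 <-].
  have lb : 0 <= l <= 1 by move: l01; rewrite in_itv /=.
  have Q0 : 0 < Qg p l by apply: (@Qg_pos _ _ e1); apply: lin_pos.
  have N0 : 0 < Num.sqrt (Qg p l) by rewrite sqrtr_gt0.
  split; first exact: S2_gam.
  by rewrite !dot_gam; split; [|split]; apply: divr_gt0 => //; apply: lin_pos.
have -> : O = \bigcup_(p in O) (gam p @` `[0, 1]).
  apply/seteqP; split.
  - move=> p Op; exists p => //; exists 0; last by apply: gam0; case: Op.
    by rewrite /= in_itv /= lexx ler01.
  - by move=> r [p Op]; apply: sub.
apply: bigcup_connected.
  exists (north_pole R) => p Op; exists 1; last exact: gam1.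
  by rewrite /= in_itv /= lexx ler01.
move=> p [Sp [d1 _]]; apply: connected_continuous_connected; first exact: segment_connected.
apply: continuous_in_subspaceT => l l01; apply: gam_cont.
have lb : 0 <= l <= 1 by move: l01; rewrite inE /= in_itv /=.
by apply: (@Qg_pos _ _ e1); apply: lin_pos.
Qed.

Lemma px_cont (p : pt) : {for p, continuous (fun q : pt => q.1.1)}.
Proof.
apply: (@continuous_comp _ _ _ fst fst); [exact: cvg_fst | exact: cvg_fst].
Qed.
Lemma py_cont (p : pt) : {for p, continuous (fun q : pt => q.1.2)}.
Proof.
apply: (@continuous_comp _ _ _ fst snd); [exact: cvg_fst | exact: cvg_snd].
Qed.
Lemma pz_cont (p : pt) : {for p, continuous (fun q : pt => q.2)}.
Proof. exact: cvg_snd. Qed.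

Lemma S2_closed : closed (@S2 R).
Proof.
have -> : @S2 R = (fun p => dot p p) @^-1` [set x | x = 1] by [].
apply: preimage_closed => // p _.
have -> : (fun p : pt => dot p p) = (fun q : pt => q.1.1) \* (fun q : pt => q.1.1) +
   (fun q : pt => q.1.2) \* (fun q : pt => q.1.2) + (fun q : pt => q.2) \* (fun q : pt => q.2).
  by apply/funext.
apply: continuousD; [apply: continuousD|]; apply: continuousM;
  by [apply: px_cont | apply: py_cont | apply: pz_cont].
Qed.
End Top.

Section Pc.
Variable R : realType.
Local Notation pt := (pt3 R).
Lemma ifLT (A : Type) (x y : R) (a b : A) : x < y -> (if x < y then a else b) = a.
Proof. by move=> ->. Qed.
Lemma ifGE (A : Type) (x y : R) (a b : A) : y <= x -> (if x < y then a else b) = b.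
Proof. by rewrite leNgt => /negbTE ->. Qed.

Definition rotn (k : nat) (p : pt) : pt := iter k (@Defs.rot R) p.
Definition fr (j : nat) (w : R) : pt :=
  match j with 0 => r1 w | 1 => r2 w | _ => r3 w end.
Definition pm (P : nat) : nat := (P %/ 3 + nth 0 [:: 0; 3; 2] (P %% 3))%N.

Lemma rot4 (p : pt) : Defs.rot (Defs.rot (Defs.rot (Defs.rot p))) = p.
Proof. by case: p => [[x y] z]; rewrite /Defs.rot /mkpt /px /py /pz /= !opprK. Qed.

Lemma rotn4 q r p : rotn (q * 4 + r) p = rotn r p.
Proof.
elim: q => [|q IH]; first by rewrite mul0n add0n.
by rewrite mulSn -addnA /rotn iterD /= rot4 -/(rotn _ _) IH.
Qed.

Lemma rotn_mod n p : rotn n p = rotn (n %% 4) p.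
Proof. by rewrite {1}(divn_eq n 4) rotn4. Qed.

Ltac ifs := repeat first [rewrite ifLT; last by lra | rewrite ifGE; last by lra].
Ltac peel := repeat first [apply: (congr1 (@r1 R)) | apply: (congr1 (@r2 R)) |
  apply: (congr1 (@r3 R)) | apply: (congr1 (@Defs.rot R))].

Lemma Rc0_piece (P : nat) u : (P < 12)%N -> P%:R / 12 <= u < P.+1%:R / 12 ->
  Rc0 u = rotn (pm P) (fr (P %% 3) (6 * u - P.+1%:R / 2)).
Proof.
move=> + /andP[l1 l2]; rewrite /Rc0 /r0.
do 12?[case: P l1 l2 => [|P] l1 l2; first by move=> _; ifs; rewrite /pm /=; peel; field].
by [].
Qed.

Definition sh1 (u : R) := if u < 2/3 then u + 3^-1 else u - 2/3.
Definition sh2 (u : R) := if u < 3^-1 then u + 2/3 else u - 3^-1.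

Lemma twelve (u : R) : 0 <= u < 1 -> exists2 P, (P < 12)%N & P%:R/12 <= u < P.+1%:R/12.
Proof.
move=> /andP[u0 u1].
case: (ltrP u (1/12)) => h1; first by exists 0%N => //; apply/andP; split; lra.
case: (ltrP u (2/12)) => h2; first by exists 1%N => //; apply/andP; split; lra.
case: (ltrP u (3/12)) => h3; first by exists 2%N => //; apply/andP; split; lra.
case: (ltrP u (4/12)) => h4; first by exists 3%N => //; apply/andP; split; lra.
case: (ltrP u (5/12)) => h5; first by exists 4%N => //; apply/andP; split; lra.
case: (ltrP u (6/12)) => h6; first by exists 5%N => //; apply/andP; split; lra.
case: (ltrP u (7/12)) => h7; first by exists 6%N => //; apply/andP; split; lra.
case: (ltrP u (8/12)) => h8; first by exists 7%N => //; apply/andP; split; lra.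
case: (ltrP u (9/12)) => h9; first by exists 8%N => //; apply/andP; split; lra.
case: (ltrP u (10/12)) => h10; first by exists 9%N => //; apply/andP; split; lra.
case: (ltrP u (11/12)) => h11; first by exists 10%N => //; apply/andP; split; lra.
by exists 11%N => //; apply/andP; split; lra.
Qed.

Ltac rpc k := rewrite (@Rc0_piece k _ erefl); last by apply/andP; split; lra.
Ltac rpcs := first [rpc 0%N | rpc 1%N | rpc 2%N | rpc 3%N | rpc 4%N | rpc 5%N | rpc 6%N |
   rpc 7%N | rpc 8%N | rpc 9%N | rpc 10%N | rpc 11%N].

Lemma triple (u : R) : 0 <= u < 1 -> exists m j w, [/\ (j < 3)%N, -2^-1 <= w < 0,
   Rc0 u = rotn m (fr j w), Rc0 (sh1 u) = rotn m (fr ((j+1) %% 3) w) &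
   Rc0 (sh2 u) = rotn m (fr ((j+2) %% 3) w)].
Proof.
move=> u01; case: (twelve _ u01) => P P12 /andP[l1 l2].
exists (pm P), (P %% 3)%N, (6*u - P.+1%:R/2).
rewrite /sh1 /sh2; move: P12 l1 l2.
do 12?[case: P => [|P]; first by move=> _ l1 l2; split => //;
  [apply/andP; split; lra | apply: Rc0_piece => //; apply/andP; split |
   ifs; rpcs; rewrite rotn_mod [in RHS]rotn_mod /pm /=; peel; field |
   ifs; rpcs; rewrite rotn_mod [in RHS]rotn_mod /pm /=; peel; field]].
by [].
Qed.
End Pc.

Arguments rotn {R}.
Arguments fr {R}.
Arguments sh1 {R}.
Arguments sh2 {R}.

Section Main.
Variable R : realType.
Local Notation pt := (pt3 R).

Lemma isq2_sq : ((isq2 R) : R) * (isq2 R) = 2^-1.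
Proof. by rewrite /isq2 -invfM -expr2 sqr_sqrtr // ler0n. Qed.
Lemma isq2_gt0 : 0 < ((isq2 R) : R).
Proof. by rewrite /isq2 invr_gt0 sqrtr_gt0 ltr0n. Qed.
Lemma s12_sq {w : R} : -2^-1 <= w < 0 -> s12 w ^+ 2 = 2^-1 - w^+2.
Proof. move=> /andP[w1 w0]; rewrite /s12 sqr_sqrtr //; nra. Qed.

Lemma HYi {s u : R} : -2^-1 <= s < 0 -> -2^-1 <= u < 0 ->
  @HY R (isq2 R) s u (s12 s) (s12 u).
Proof.
move=> hs hu; have := s12_sq hs; have := s12_sq hu.
case/andP: hs => s1 s0; case/andP: hu => u1 u0 Eu Es.
split; [exact: isq2_sq | exact: isq2_gt0 | by [] | exact: ltW | ].
split; [by [] | exact: ltW | exact: sqrtr_ge0 | exact: sqrtr_ge0 | by split].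
Qed.

Lemma key {k j : nat} {s u : R} : (k < 4)%N -> (j < 3)%N -> -2^-1 <= s < 0 -> -2^-1 <= u < 0 ->
  exists2 i, (i < 3)%N & dot (rotn k (fr j s)) (fr i u) <= 0.
Proof.
move=> k4 j3 hs hu; have H := HYi hs hu.
case: k k4 => [|[|[|[|k]]]] // _; case: j j3 => [|[|[|j]]] // _; rewrite /rotn /fr /=.
- case: (lerP s u) => su.
    by exists 1%N => //; exact: (@d00a _ _ _ _ _ _ H su).
  by exists 2%N => //; exact: (@d00b _ _ _ _ _ _ H (ltW su)).
- case: (lerP s u) => su.
    by exists 2%N => //; exact: (@d01b _ _ _ _ _ _ H su).
  by exists 0%N => //; exact: (@d01a _ _ _ _ _ _ H (ltW su)).
- case: (lerP s u) => su.
    by exists 0%N => //; exact: (@d02a _ _ _ _ _ _ H su).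
  by exists 1%N => //; exact: (@d02b _ _ _ _ _ _ H (ltW su)).
- by exists 2%N => //; exact: (@d10 _ _ _ _ _ _ H).
- by exists 0%N => //; exact: (@d11 _ _ _ _ _ _ H).
- by exists 1%N => //; exact: (@d12 _ _ _ _ _ _ H).
- by exists 0%N => //; exact: (@d20 _ _ _ _ _ _ H).
- by exists 1%N => //; exact: (@d21 _ _ _ _ _ _ H).
- by exists 2%N => //; exact: (@d22 _ _ _ _ _ _ H).
- by exists 1%N => //; exact: (@d30 _ _ _ _ _ _ H).
- by exists 2%N => //; exact: (@d31 _ _ _ _ _ _ H).
- by exists 0%N => //; exact: (@d32 _ _ _ _ _ _ H).
Qed.

Lemma dot_sym (p q : pt) : dot p q = dot q p.
Proof. by rewrite /dot; ring. Qed.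
Lemma dot_rot (p q : pt) : dot (Defs.rot p) (Defs.rot q) = dot p q.
Proof. by rewrite /dot /Defs.rot /mkpt /px /py /pz /=; ring. Qed.
Lemma dot_rotn m (p q : pt) : dot (rotn m p) (rotn m q) = dot p q.
Proof. by elim: m => // m IH; rewrite /rotn /= dot_rot. Qed.
Lemma rotnD a b (p : pt) : rotn a (rotn b p) = rotn (a + b) p.
Proof. by rewrite /rotn iterD. Qed.
Lemma dot_shift m' m (x y : pt) :
  dot (rotn m' x) (rotn m y) = dot (rotn ((m' + 3 * m) %% 4) x) y.
Proof.
rewrite -rotn_mod -[RHS](dot_rotn m) rotnD.
have -> : (m + (m' + 3 * m) = m * 4 + m')%N by ring.
by rewrite rotn4.
Qed.

Lemma pz_rotn m (p : pt) : pz (rotn m p) = pz p.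
Proof. by elim: m => // m IH; rewrite /rotn /=. Qed.

Lemma r3E {w : R} : -2^-1 <= w < 0 ->
  r3 w = mkpt (-((isq2 R)*s12 w/(1+w))) (-s12 w) ((2^-1+w+w^+2)/(1+w)).
Proof.
move=> /andP[w1 w0]; have : 1 + w != 0 by rewrite gt_eqF //; lra.
exact: (@V3E R (isq2 R) w (s12 w) isq2_sq).
Qed.

Lemma pz_fr j (w : R) : (j < 3)%N -> -2^-1 <= w < 0 -> 0 < pz (fr j w).
Proof.
move=> j3 hw; have E := s12_sq hw; have := sqrtr_ge0 (2^-1 - w^+2).
rewrite -/(s12 w) => S0; case/andP: hw => w1 w0.
have S1 : 0 < s12 w by rewrite /s12 sqrtr_gt0; nra.
case: j j3 => [|[|[|j]]] // _.
- rewrite /fr /r2 /pz /mkpt /=; apply: mulr_gt0; first exact: isq2_gt0.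
  by apply: divr_gt0 => //; lra.
- rewrite /fr r3E ?w1 // /pz /mkpt /=; apply: divr_gt0; nra.
Qed.

Lemma eq0_eq (x y d : R) : d != 0 -> x * d = y -> y = 0 -> x = 0.
Proof. by move=> d0 <- /eqP; rewrite mulf_eq0 (negbTE d0) orbF => /eqP. Qed.

Lemma orth12 {w : R} : -2^-1 <= w < 0 -> dot (r1 w) (r2 w) = 0.
Proof.
move=> hw; have E := s12_sq hw; case/andP: hw => w1 w0.
have bn : 1 + w != 0 by rewrite gt_eqF //; lra.
apply: (@eq0_eq _ ((isq2 R) * (-(2^-1+w) + w*(1+w) + s12 w ^+ 2)) (1+w) bn).
  by rewrite /dot /r1 /r2 /mkpt /px /py /pz /=; field.
by rewrite E; ring.
Qed.
Lemma orth13 (w : R) : dot (r1 w) (r3 w) = 0.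
Proof. by rewrite /r3 /dot /cross /mkpt /px /py /pz /=; ring. Qed.
Lemma orth23 (w : R) : dot (r2 w) (r3 w) = 0.
Proof. by rewrite /r3 /dot /cross /mkpt /px /py /pz /=; ring. Qed.

Lemma orth {j : nat} {w : R} : (j < 3)%N -> -2^-1 <= w < 0 ->
  [/\ dot (fr j w) (fr ((j+1) %% 3) w) = 0, dot (fr j w) (fr ((j+2) %% 3) w) = 0 &
      dot (fr ((j+1) %% 3) w) (fr ((j+2) %% 3) w) = 0].
Proof.
move=> j3 hw; have h12 := orth12 hw; have h13 := orth13 w; have h23 := orth23 w.
case: j j3 => [|[|[|j]]] // _; rewrite /fr /=; split => //; by rewrite dot_sym.
Qed.

Lemma RcurveE (t : R) : exists2 u, 0 <= u < 1 &
  [/\ Rcurve t = Rc0 u, Rcurve (t + 3^-1) = Rc0 (sh1 u) & Rcurve (t + 2 / 3) = Rc0 (sh2 u)].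
Proof.
set n := Num.floor t.
have /andP[f1 f2] := floor_itv t; rewrite -/n intrD /= in f1 f2.
have Rat : forall (x : R) (m : int), (m%:~R <= x < m%:~R + 1) -> Rcurve x = Rc0 (x - m%:~R).
  move=> x m /andP[a b]; rewrite /Rcurve (_ : Num.floor x = m) //.
  by apply: floor_def; rewrite intrD; apply/andP; split.
exists (t - n%:~R); first by apply/andP; split; lra.
split; first by [].
- rewrite /sh1; case: (ltrP (t - n%:~R) (2/3)) => h.
    rewrite (Rat _ n); last by apply/andP; split; lra.
    by congr Rc0; ring.
  rewrite (Rat _ (n + 1)); last by rewrite intrD; apply/andP; split; lra.
  by rewrite intrD; congr Rc0; field.
- rewrite /sh2; case: (ltrP (t - n%:~R) (3^-1)) => h.
    rewrite (Rat _ n); last by apply/andP; split; lra.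
    by congr Rc0; field.
  rewrite (Rat _ (n + 1)); last by rewrite intrD; apply/andP; split; lra.
  by rewrite intrD; congr Rc0; field.
Qed.

Lemma Gamma_pt (q : pt) : Gamma q ->
  exists m j w, [/\ (j < 3)%N, -2^-1 <= w < 0 & q = rotn m (fr j w)].
Proof.
case=> t _ <-; have [u u01 [E _ _]] := RcurveE t.
have [m [j [w [j3 wb E1 _ _]]]] := triple _ _ u01.
by exists m, j, w; split => //; rewrite E E1.
Qed.

Lemma avoid m j (w : R) (r : pt) : (j < 3)%N -> -2^-1 <= w < 0 -> Gamma r ->
  ~ (0 < dot r (rotn m (fr j w)) /\ 0 < dot r (rotn m (fr ((j+1) %% 3) w)) /\
     0 < dot r (rotn m (fr ((j+2) %% 3) w))).
Proof.
move=> j3 wb /Gamma_pt [m' [j' [w' [j3' wb' ->]]]] [d1 [d2 d3]].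
have [i i3 le] := key (ltn_pmod (m' + 3 * m) (isT : (0 < 4)%N)) j3' wb' wb.
rewrite !dot_shift in d1 d2 d3.
case: j j3 d1 d2 d3 => [|[|[|j]]] // _ d1 d2 d3;
case: i i3 le => [|[|[|i]]] // _ le; rewrite /= in d2 d3; lra.
Qed.

Lemma main_incl (e1 e2 e3 : pt) :
  (forall r, Gamma r -> ~ (0 < dot r e1 /\ 0 < dot r e2 /\ 0 < dot r e3)) ->
  0 < pz e1 -> 0 < pz e2 -> 0 < pz e3 ->
  closure [set r | S2 r /\ 0 < dot r e1 /\ 0 < dot r e2 /\ 0 < dot r e3] `<=` @regionA R.
Proof.
move=> av z1 z2 z3 p cp.
have cO := @oct_conn R _ _ _ z1 z2 z3.
set O := [set r | _] in cO cp *.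
have dnp : forall e : pt, dot (north_pole R) e = pz e.
  by move=> e; rewrite /dot /north_pole /mkpt /px /py /pz /=; ring.
have Onp : O (north_pole R).
  split; first by rewrite /S2 /= dnp /north_pole /mkpt /pz.
  by rewrite !dnp.
have OS : O `<=` (@S2 R `\` @Gamma R) by move=> r [Sr ds]; split => // G; exact: (av r G ds).
have Sp : S2 p by apply: S2_closed; apply: (closureS _ cp) => r [].
case: (pselect (Gamma p)) => gp; [by left | right].
have cB : connected (O `|` [set p]).
  apply: (@conn_between R _ _ cO); first by move=> r Or; left.
  by move=> r [Or | ->] //; apply: subset_closure.
have BS : O `|` [set p] `<=` (@S2 R `\` @Gamma R) by move=> r [Or | ->]; [exact: OS | split].
by apply: (connected_component_max _ BS cB); [left | right].
Qed.
End Main.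

Theorem lemma3p3 (R : realType) (t : R) :
  [/\ dot (Rcurve t) (Rcurve (t + 3^-1)) = 0,
      dot (Rcurve t) (Rcurve (t + 2 / 3)) = 0,
      dot (Rcurve (t + 3^-1)) (Rcurve (t + 2 / 3)) = 0 &
      closure (octant t) `<=` @regionA R].
Proof.
have [u u01 [E1 E2 E3]] := RcurveE _ t.
have [m [j [w [j3 wb F1 F2 F3]]]] := triple _ _ u01.
have [q1 q2 q3] := orth _ j3 wb.
rewrite /octant E1 E2 E3 F1 F2 F3 !dot_rotn; split => //.
apply: main_incl; rewrite ?pz_rotn; try apply: pz_fr => //.
- by move=> r G; apply: avoid.
- by case: j j3 {F1 F2 F3 q1 q2 q3} => [|[|[|]]].
- by case: j j3 {F1 F2 F3 q1 q2 q3} => [|[|[|]]].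
Qed.
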